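(* A persistent cochain complex $\mathbb{X}\in p\mathsf{Ch}^*_\mathbb{Q}$ is locally compact if and only if the persistence module $\mathbb{X}^k$ is locally compact for every $k\ge0$.
   Context: $p\mathsf{Ch}^*_\mathbb{Q}$ is the category of functors from $[0,\infty)$ to non-negatively graded rational cochain complexes; $\mathbb{X}^k$ is the persistence module of degree-$k$ cochains. A persistence module (functor $[0,\infty)\to\mathsf{Vec}_\mathbb{Q}$) is compact if it is a compact object (equivalently tame with finite-dimensional components), and is locally compact if every element lies in a compact submodule. A persistent complex is compact if it is a compact object of $p\mathsf{Ch}^*_\mathbb{Q}$ (equivalently tame and with each component a bounded, degreewise finite-dimensional complex), and $\mathbb{X}$ is locally compact if every element $x\in\mathbb{X}^k(r)$ lies in some compact subcomplex of $\mathbb{X}$. *)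

(* Defs.v *)
From HB Require Import structures.
From mathcomp Require Import all_boot all_order all_algebra.
From Stdlib Require Import Rdefinitions Raxioms.
From Stdlib Require List.

Set Implicit Arguments.
Unset Strict Implicit.
Unset Printing Implicit Defensive.

Import GRing.Theory.
Local Open Scope ring_scope.

Definition Rnn : Type := {r : R | Rle R0 r}.
Definition rnn_le (r s : Rnn) : Prop := Rle (proj1_sig r) (proj1_sig s).

(* A persistence module: a functor [0,oo) -> Vec_Q.  The structure map
   pm_map r s is only meaningful (and only constrained) when r <= s. *)
Record pmod := PMod {
  pm_V :> Rnn -> lmodType rat;
  pm_map : forall r s : Rnn, pm_V r -> pm_V s;
  pm_map_lin : forall r s, rnn_le r s ->
    forall (a : rat) (x y : pm_V r), pm_map s (a *: x + y) = a *: pm_map s x + pm_map s y;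
  pm_map_id : forall r (x : pm_V r), pm_map r x = x;
  pm_map_comp : forall r s t, rnn_le r s -> rnn_le s t ->
    forall x : pm_V r, pm_map t (pm_map s x) = pm_map t x
}.
Arguments pm_map : clear implicits.

(* A persistent (non-negatively graded, rational) cochain complex:
   a functor [0,oo) -> Ch^*_Q, given degreewise by persistence modules
   X^k = pc_mod k together with natural differentials d^k : X^k -> X^{k+1}. *)
Record pcomplex := PComplex {
  pc_mod : nat -> pmod;
  pc_d : forall (k : nat) (r : Rnn), pc_mod k r -> pc_mod k.+1 r;
  pc_d_lin : forall k r (a : rat) (x y : pc_mod k r),
    pc_d (a *: x + y) = a *: pc_d x + pc_d y;
  pc_dd : forall k r (x : pc_mod k r), pc_d (pc_d x) = 0;
  pc_d_nat : forall k r s, rnn_le r s -> forall x : pc_mod k r,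
    pc_d (pm_map (pc_mod k) r s x) = pm_map (pc_mod k.+1) r s (pc_d x)
}.
Arguments pc_d : clear implicits.

Definition fd_subspace (V : lmodType rat) (P : V -> Prop) : Prop :=
  exists vs : seq V, (forall i, leq i.+1 (size vs) -> P (nth 0 vs i)) /\
    forall x, P x -> exists c : 'I_(size vs) -> rat,
      x = \sum_(i < size vs) c i *: nth 0 vs i.

Definition is_submod (M : pmod) (S : forall r, M r -> Prop) : Prop :=
  (forall r, S r 0) /\
  (forall r (a : rat) (x y : M r), S r x -> S r y -> S r (a *: x + y)) /\
  (forall r s (x : M r), rnn_le r s -> S r x -> S s (pm_map M r s x)).

Definition restr_iso (M : pmod) (S : forall r, M r -> Prop) (r s : Rnn) : Prop :=
  (forall x y : M r, S r x -> S r y -> pm_map M r s x = pm_map M r s y -> x = y) /\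
  (forall y : M s, S s y -> exists x : M r, S r x /\ pm_map M r s x = y).

Definition tame_wrt (T : list R) (M : pmod) (S : forall r, M r -> Prop) : Prop :=
  forall r s : Rnn, rnn_le r s ->
    (forall t, List.In t T -> ~ (Rlt (proj1_sig r) t /\ Rle t (proj1_sig s))) ->
    restr_iso S r s.

Definition compact_submod (M : pmod) (S : forall r, M r -> Prop) : Prop :=
  is_submod S /\ (exists T : list R, tame_wrt T S) /\ (forall r, fd_subspace (S r)).

Definition locally_compact_mod (M : pmod) : Prop :=
  forall r (x : M r), exists S : forall r, M r -> Prop, compact_submod S /\ S r x.

Definition is_subcomplex (X : pcomplex) (S : forall k r, pc_mod X k r -> Prop) : Prop :=
  (forall k, is_submod (S k)) /\
  (forall k r (x : pc_mod X k r), S k r x -> S k.+1 r (pc_d X k r x)).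

Definition compact_subcomplex (X : pcomplex) (S : forall k r, pc_mod X k r -> Prop) : Prop :=
  is_subcomplex S /\
  (exists T : list R, forall k, tame_wrt T (S k)) /\
  (forall r, exists N : nat, forall k, leq N.+1 k -> forall x, S k r x -> x = 0) /\
  (forall k r, fd_subspace (S k r)).

Definition locally_compact_complex (X : pcomplex) : Prop :=
  forall k r (x : pc_mod X k r),
    exists S : forall k r, pc_mod X k r -> Prop, compact_subcomplex S /\ S k r x.

(* Main.v *)
Require Import Defs.
From HB Require Import structures.
From mathcomp Require Import all_boot all_order all_algebra.
From Stdlib Require Import Rdefinitions Raxioms RIneq Lra Classical ProofIrrelevance.
From Stdlib Require List.
Set Implicit Arguments.
Unset Strict Implicit.
Unset Printing Implicit Defensive.
Import GRing.Theory.
Local Open Scope ring_scope.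

Lemma list_max_base (l : list R) (x0 u : R) : Rle x0 u ->
  exists b, (b = x0 \/ List.In b l) /\ Rle x0 b /\ Rle b u /\
    forall t, List.In t l -> ~ (Rlt b t /\ Rle t u).
Proof.
move=> h; elim: l => [|a l [b [Hb [H1 [H2 H3]]]]].
  by exists x0; split; [left|split; [apply Rle_refl|split=>// t []]].
destruct (classic (Rlt b a /\ Rle a u)) as [[Ha1 Ha2]|Ha].
  exists a; split; [right; left=>//|split; [lra|split=>//]].
  move=> t [->|Ht] [Ht1 Ht2]; first lra.
  by apply: (H3 t Ht); split=>//; lra.
exists b; split; [case: Hb => Hb; [left|right; right]=>//|split=>//; split=>//].
by move=> t [<-|Ht] //; apply: H3.
Qed.

Lemma list_max_all (l : list R) (x0 : R) :
  exists b, (b = x0 \/ List.In b l) /\ Rle x0 b /\ forall t, List.In t l -> Rle t b.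
Proof.
elim: l => [|a l [b [Hb [H1 H3]]]].
  by exists x0; split; [left|split; [apply Rle_refl|move=> t []]].
destruct (Rle_dec a b) as [Ha|Ha']; last have Ha := Rnot_le_lt _ _ Ha'.
  exists b; split; [case: Hb => Hb; [left|right; right]=>//|split=>//].
  by move=> t [<-|Ht] //; apply: H3.
exists a; split; [right; left=>//|split; first lra].
move=> t [->|Ht]; first lra.
have := H3 t Ht; lra.
Qed.

Lemma list_min_P (P : R -> Prop) (l : list R) :
  (exists x, List.In x l /\ P x) ->
  exists m, List.In m l /\ P m /\ forall y, List.In y l -> P y -> Rle m y.
Proof.
elim: l => [[x [[] _]]|a l IH Hex].
destruct (classic (exists x, List.In x l /\ P x)) as [Hl|Hl].
  have [m [Hm [Pm Hmin]]] := IH Hl.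
  destruct (classic (P a /\ Rlt a m)) as [[Pa Ham]|Ha].
    exists a; split; [left=>//|split=>//].
    move=> y [->|Hy] Py; first lra.
    have := Hmin y Hy Py; lra.
  exists m; split; [right=>//|split=>//].
  move=> y [<-|Hy] Py; last exact: Hmin.
  case: (Rle_dec m a) => Hmy //.
  exfalso; apply: Ha; split=>//.
  exact: Rnot_le_lt.
have Pa : P a.
  case: Hex => x [[->|Hx] Px] //; exfalso; apply: Hl; by exists x.
exists a; split; [left=>//|split=>//].
move=> y [->|Hy] Py; first lra.
by exfalso; apply: Hl; exists y.
Qed.

Lemma enum_bounded (P : R -> Prop) (n : nat) :
  (forall l, List.NoDup l -> (forall x, List.In x l -> P x) -> leq (length l) n) ->
  exists T, forall x, P x -> List.In x T.
Proof.
move=> Hb; apply: NNPP => Hno.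
have Hall : forall T, exists x, P x /\ ~ List.In x T.
  move=> T; apply: NNPP => H; apply: Hno; exists T => x Px.
  by apply: NNPP => Hx; apply: H; exists x.
have Hk : forall k, exists l, List.NoDup l /\ (forall x, List.In x l -> P x) /\ length l = k.
  elim=> [|k [l [Hl1 [Hl2 Hl3]]]]; first by exists nil; split; [constructor|split=>//].
  have [x [Px Hx]] := Hall l.
  exists (x :: l); split; first by constructor.
  split; last by rewrite /= Hl3.
  by move=> y [<-|Hy] //; apply: Hl2.
have [l [Hl1 [Hl2 Hl3]]] := Hk n.+1.
by have := Hb l Hl1 Hl2; rewrite Hl3 ltnn.
Qed.

Definition mkRnn (x : R) (H : Rle R0 x) : Rnn := exist (fun r => Rle R0 r) x H.

Lemma rnn_le_trans (a b c : Rnn) : rnn_le a b -> rnn_le b c -> rnn_le a c.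
Proof. rewrite /rnn_le => ??; lra. Qed.

Lemma rnn_le_refl (a : Rnn) : rnn_le a a.
Proof. rewrite /rnn_le; lra. Qed.

Lemma pm0 (M : pmod) r s : rnn_le r s -> pm_map M r s 0 = 0.
Proof.
move=> h; have H := @pm_map_lin M r s h 1 0 0; rewrite scaler0 addr0 scale1r in H.
by apply: (addrI (pm_map M r s 0)); rewrite addr0 -H.
Qed.

Lemma pmD (M : pmod) r s (x y : M r) : rnn_le r s -> pm_map M r s (x + y) = pm_map M r s x + pm_map M r s y.
Proof. by move=> h; have := @pm_map_lin M r s h 1 x y; rewrite !scale1r. Qed.

Lemma pmZ (M : pmod) r s a (x : M r) : rnn_le r s -> pm_map M r s (a *: x) = a *: pm_map M r s x.
Proof. by move=> h; have H := @pm_map_lin M r s h a x 0; rewrite addr0 (pm0 M h) addr0 in H. Qed.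

Lemma pm_sum (M : pmod) r s n (a : 'I_n -> rat) (x : 'I_n -> M r) : rnn_le r s ->
  pm_map M r s (\sum_(i < n) a i *: x i) = \sum_(i < n) a i *: pm_map M r s (x i).
Proof.
move=> h; apply: (big_rec2 (fun y1 y2 => pm_map M r s y1 = y2)); first exact: pm0.
by move=> i y1 y2 _ <-; rewrite pm_map_lin.
Qed.

Definition noT (T : list R) (r s : Rnn) := forall t, List.In t T -> ~ (Rlt (proj1_sig r) t /\ Rle t (proj1_sig s)).

Definition deathpt (M : pmod) (t0 : Rnn) (w : M t0) (d : Rnn) :=
  rnn_le t0 d /\ pm_map M t0 d w = 0 /\
  forall u : Rnn, rnn_le t0 u -> Rlt (proj1_sig u) (proj1_sig d) -> pm_map M t0 u w <> 0.

Lemma inj_step (M : pmod) (D : forall r, M r -> Prop) T t0 (w : M t0) (c u : Rnn) :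
  is_submod D -> tame_wrt T D -> D t0 w -> rnn_le t0 c -> rnn_le c u -> noT T c u ->
  pm_map M t0 u w = 0 -> pm_map M t0 c w = 0.
Proof.
move=> [D0 [Dlin Dmap]] tD Dw h1 h2 hT hu.
have [inj _] := tD c u h2 hT.
apply: inj; [exact: Dmap | exact: D0 |].
by rewrite pm_map_comp // pm0.
Qed.

Lemma death_exists (M : pmod) (lc : locally_compact_mod M) t0 (w : M t0) s :
  rnn_le t0 s -> pm_map M t0 s w = 0 ->
  exists d, deathpt w d /\ Rle (proj1_sig d) (proj1_sig s).
Proof.
move=> hs hw.
have [D [[Dsub [[T tD] _]] Dw]] := lc t0 w.
pose P x := Rle (proj1_sig t0) x /\ Rle x (proj1_sig s) /\
   exists u : Rnn, proj1_sig u = x /\ pm_map M t0 u w = 0.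
have t0pos : Rle R0 (proj1_sig t0) := proj2_sig t0.
have Hex : exists x, List.In x (proj1_sig t0 :: T) /\ P x.
  have [b [Hb [Hb1 [Hb2 Hb3]]]] := list_max_base T hs.
  have bpos : Rle R0 b by lra.
  exists b; split; first by case: Hb => [->|]; [left|right].
  split=>//; split=>//; exists (mkRnn bpos); split=>//.
  by apply: (inj_step Dsub tD Dw) hw.
have [m [Hm [[Pm1 [Pm2 [d [Hd Hdw]]]] Hmin]]] := list_min_P Hex.
exists d; split; last by rewrite Hd.
split; first by rewrite /rnn_le Hd.
split=>// u hu1 hu2 hu.
have hus : Rle (proj1_sig u) (proj1_sig s) by lra.
have [c [Hc [Hc1 [Hc2 Hc3]]]] := list_max_base T hu1.
have cpos : Rle R0 c by lra.
have := Hmin c; rewrite /P.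
have Hcw : pm_map M t0 (mkRnn cpos) w = 0.
  by apply: (inj_step Dsub tD Dw _ _ _ hu).
move=> H; have : Rle m c.
  apply: H; first by case: Hc => [->|]; [left|right].
  split=>//; split; first lra.
  by exists (mkRnn cpos).
lra.
Qed.

Lemma fin_max_base (I : finType) (P : pred I) (f : I -> R) (x0 : R) :
  exists b, (b = x0 \/ exists i, P i /\ b = f i) /\ Rle x0 b /\
    forall i, P i -> Rle (f i) b.
Proof.
suff : forall s : seq I, exists b, (b = x0 \/ exists i, P i /\ b = f i) /\ Rle x0 b /\
    forall i, i \in s -> P i -> Rle (f i) b.
  by move=> /(_ (enum I)) [b [H1 [H2 H3]]]; exists b; split=>//; split=>// i; apply: H3; rewrite mem_enum.
elim=> [|a s [b [H1 [H2 H3]]]].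
  by exists x0; split; [left|split; [apply: Rle_refl|]].
case Pa: (P a); last first.
  exists b; split=>//; split=>// i; rewrite in_cons => /orP [/eqP ->|]; first by rewrite Pa.
  exact: H3.
case: (Rle_dec (f a) b) => Hab.
  exists b; split=>//; split=>// i; rewrite in_cons => /orP [/eqP -> _ //|]; exact: H3.
have Hab' := Rnot_le_lt _ _ Hab.
exists (f a); split; first by right; exists a.
split; first lra.
move=> i; rewrite in_cons => /orP [/eqP -> _|Hi Pi]; first lra.
have := H3 i Hi Pi; lra.
Qed.

Lemma indep (M : pmod) t0 n m (vs : 'I_n -> M t0) (c : 'I_m -> 'I_n -> rat) (d : 'I_m -> Rnn) :
  leq n.+1 m ->
  (forall i j, i != j -> proj1_sig (d i) <> proj1_sig (d j)) ->
  (forall i, Rlt (proj1_sig t0) (proj1_sig (d i))) ->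
  (forall i, deathpt (\sum_(j < n) c i j *: vs j) (d i)) -> False.
Proof.
move=> nm dd dpos dth.
pose w i := \sum_(j < n) c i j *: vs j.
pose A : 'M[rat]_(m, n) := \matrix_(i, j) c i j.
have Kn0 : kermx A != 0.
  rewrite -mxrank_eq0 mxrank_ker -lt0n subn_gt0.
  exact: leq_ltn_trans (rank_leq_col A) nm.
have [i0 Hi0] : exists i0, row i0 (kermx A) != 0.
  case/boolP: [exists i, row i (kermx A) != 0] => [/existsP //|/existsPn Hn].
  case/eqP: Kn0; apply/row_matrixP => i; rewrite row0; apply/eqP.
  by have := Hn i; rewrite negbK.
set a := row i0 (kermx A) in Hi0.
have aA : a *m A = 0 by apply/sub_kermxP; exact: row_sub.
have Hsum : \sum_(i < m) a 0 i *: w i = 0.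
  rewrite /w.
  under eq_bigr => i _ do rewrite scaler_sumr.
  rewrite exchange_big /=.
  apply: big1 => j _.
  under eq_bigr => i _ do rewrite scalerA.
  rewrite -scaler_suml.
  have H : \sum_(i < m) a 0 i * c i j = 0.
    have := congr1 (fun Z : 'M[rat]_(1, n) => Z 0 j) aA; rewrite mxE [X in _ = X -> _]mxE => H0.
    apply: (etrans _ H0); apply: eq_bigr => i _. by congr (_ * _); rewrite /A mxE.
  by rewrite H scale0r.
have [i1 Hi1] : exists i1, a 0 i1 != 0.
  case/boolP: [exists i, a 0 i != 0] => [/existsP //|/existsPn Hn].
  case/eqP: Hi0; apply/rowP => i; rewrite [RHS]mxE; apply/eqP.
  by have := Hn i; rewrite negbK.
pose f i := proj1_sig (d i).
have [b [Hb [Hb1 Hb2]]] := fin_max_base (fun i => a 0 i != 0) f (proj1_sig t0).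
have [m0 [Pm0 Hbm0]] : exists m0, a 0 m0 != 0 /\ b = f m0.
  case: Hb => [Hb|//]. 
  have := Hb2 i1 Hi1; have := dpos i1; rewrite /f; lra.
have [b2 [Hc [Hc1 Hc2]]] := fin_max_base (fun i => (a 0 i != 0) && (i != m0)) f (proj1_sig t0).
have Hb2m : Rlt b2 (f m0).
  case: Hc => [->|[i [/andP [Pi Him] ->]]]; first exact: dpos.
  have := Hb2 i Pi; rewrite -Hbm0 => H1.
  case: H1 => // H1; exfalso; apply: (dd i m0 Him); rewrite /f in H1 Hbm0; by rewrite H1 Hbm0.
have t0pos : Rle R0 (proj1_sig t0) := proj2_sig t0.
have upos : Rle R0 b2 by lra.
pose u := mkRnn upos.
have hu : rnn_le t0 u by [].
have Hdead : forall i, (a 0 i != 0) && (i != m0) -> pm_map M t0 u (w i) = 0.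
  move=> i Pi; have [h1 [h2 _]] := dth i.
  have h3 : rnn_le (d i) u by have := Hc2 i Pi.
  by rewrite -(pm_map_comp h1 h3) h2 pm0.
have Hnd : pm_map M t0 u (w m0) <> 0.
  by have [_ [_ H]] := dth m0; apply: H.
have := congr1 (pm_map M t0 u) Hsum.
rewrite pm_sum // pm0 // (bigD1 m0) //= big1 ?addr0.
  by move/eqP; rewrite scaler_eq0 (negbTE Pm0) /= => /eqP.
move=> i Him; case: (eqVneq (a 0 i) 0) => [->|Hai]; first by rewrite scale0r.
by rewrite Hdead ?scaler0 // Hai Him.
Qed.

Lemma KL (M : pmod) (lc : locally_compact_mod M) t0 n (vs : 'I_n -> M t0) :
  exists T, forall r s, rnn_le t0 r -> rnn_le r s -> noT T r s ->
    forall c : 'I_n -> rat, pm_map M t0 s (\sum_(j < n) c j *: vs j) = 0 ->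
      pm_map M t0 r (\sum_(j < n) c j *: vs j) = 0.
Proof.
pose Del x := Rlt (proj1_sig t0) x /\ exists d : Rnn, proj1_sig d = x /\
   exists c : 'I_n -> rat, deathpt (\sum_(j < n) c j *: vs j) d.
have [T HT] : exists T, forall x, Del x -> List.In x T.
  apply: (@enum_bounded Del n) => l nd Hl.
  case: (leqP (length l) n) => [//|Hlt]; exfalso.
  have Hex : forall i : 'I_(length l), exists p : Rnn * ('I_n -> rat),
      Rlt (proj1_sig t0) (proj1_sig p.1) /\ proj1_sig p.1 = List.nth i l R0 /\
      deathpt (\sum_(j < n) p.2 j *: vs j) p.1.
    move=> i; have [H1 [d [Hd [c Hc]]]] := Hl _ (List.nth_In l R0 (elimT ltP (ltn_ord i))).
    by exists (d, c); rewrite /= Hd.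
  have [g Hg] := fin_all_exists Hex.
  apply: (@indep M t0 n (length l) vs (fun i => (g i).2) (fun i => (g i).1) Hlt).
  - move=> i j Hij; have [_ [Hi _]] := Hg i; have [_ [Hj _]] := Hg j.
    rewrite Hi Hj => Heq; move/eqP: Hij; apply; apply: val_inj => /=.
    have := (proj1 (List.NoDup_nth l R0) nd i j (elimT ltP (ltn_ord i)) (elimT ltP (ltn_ord j)) Heq).
    by [].
  - by move=> i; have [H _] := Hg i.
  - by move=> i; have [_ [_ H]] := Hg i.
exists T => r s hr hs hT c hw.
have h0s := rnn_le_trans hr hs.
have [d [[hd1 [hd2 hd3]] hds]] := death_exists lc h0s hw.
case: (Rle_dec (proj1_sig d) (proj1_sig r)) => Hdr.
  by rewrite -(pm_map_comp hd1 Hdr) hd2 pm0.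
have Hdr' := Rnot_le_lt _ _ Hdr.
exfalso; apply: (hT (proj1_sig d)); last by split.
apply: HT; split; first by rewrite /rnn_le in hr; lra.
exists d; split=>//; exists c; split=>//.
Qed.

Lemma submod_ext (M : pmod) (S S' : forall r, M r -> Prop) :
  (forall r x, S r x <-> S' r x) -> is_submod S -> is_submod S'.
Proof.
move=> E [H0 [H1 H2]]; split; first by move=> r; apply/E.
split; first by move=> r a x y /E Hx /E Hy; apply/E; apply: H1.
by move=> r s x h /E Hx; apply/E; apply: H2.
Qed.

Lemma tame_ext (M : pmod) (S S' : forall r, M r -> Prop) T :
  (forall r x, S r x <-> S' r x) -> tame_wrt T S -> tame_wrt T S'.
Proof.
move=> E tS r s h hT; have [inj sur] := tS r s h hT; split.
  by move=> x y /E Hx /E Hy; apply: inj.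
by move=> y /E Hy; have [x [Hx <-]] := sur y Hy; exists x; split=>//; apply/E.
Qed.

Lemma tame_mono (M : pmod) (S : forall r, M r -> Prop) T T' :
  (forall t, List.In t T -> List.In t T') -> tame_wrt T S -> tame_wrt T' S.
Proof. by move=> inc tS r s h hT; apply: tS => // t Ht; apply: hT; apply: inc. Qed.

Lemma fd_ext (V : lmodType rat) (P P' : V -> Prop) :
  (forall x, P x <-> P' x) -> fd_subspace P -> fd_subspace P'.
Proof.
move=> E [vs [H1 H2]]; exists vs; split; first by move=> i Hi; apply/E; apply: H1.
by move=> x /E Hx; apply: H2.
Qed.

Lemma noT_mono T T' r s : (forall t, List.In t T -> List.In t T') -> noT T' r s -> noT T r s.
Proof. by move=> inc h t Ht; apply: h; apply: inc. Qed.

Lemma combine (Q : R -> list R -> Prop) :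
  (forall t T T', Q t T -> (forall x, List.In x T -> List.In x T') -> Q t T') ->
  forall l, (forall t, List.In t l -> exists T, Q t T) -> exists T, forall t, List.In t l -> Q t T.
Proof.
move=> mono; elim=> [|a l IH] H; first by exists nil.
have [T1 H1] := H a (or_introl erefl).
have [T2 H2] := IH (fun t Ht => H t (or_intror Ht)).
exists (T1 ++ T2) => t [<-|Ht].
  by apply: mono H1 _ => x Hx; apply: List.in_or_app; left.
by apply: mono (H2 t Ht) _ => x Hx; apply: List.in_or_app; right.
Qed.

Lemma zero_submod (M : pmod) : is_submod (fun r (x : M r) => x = 0).
Proof.
split=>//; split; first by move=> r a x y -> ->; rewrite scaler0 addr0.
by move=> r s x h ->; rewrite pm0.
Qed.

Lemma zero_tame (M : pmod) T : tame_wrt T (fun r (x : M r) => x = 0).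
Proof.
move=> r s h _; split; first by move=> x y -> ->.
by move=> y ->; exists 0; split=>//; rewrite pm0.
Qed.

Lemma zero_fd (V : lmodType rat) : fd_subspace (fun x : V => x = 0).
Proof.
exists [::]; split=>// x ->; exists (fun _ => 0); by rewrite big_ord0.
Qed.

Lemma d0 (X : pcomplex) k r : pc_d X k r 0 = 0.
Proof.
have H := @pc_d_lin X k r 1 0 0; rewrite scaler0 addr0 scale1r in H.
by apply: (addrI (pc_d X k r 0)); rewrite addr0 -H.
Qed.

Lemma d_sum (X : pcomplex) k r n (a : 'I_n -> rat) (x : 'I_n -> pc_mod X k r) :
  pc_d X k r (\sum_(i < n) a i *: x i) = \sum_(i < n) a i *: pc_d X k r (x i).
Proof.
apply: (big_rec2 (fun y1 y2 => pc_d X k r y1 = y2)); first exact: d0.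
by move=> i y1 y2 _ <-; rewrite pc_d_lin.
Qed.

Definition dC (X : pcomplex) k (C : forall r, pc_mod X k r -> Prop) :
  forall r, pc_mod X k.+1 r -> Prop :=
  fun r y => exists c, C r c /\ y = pc_d X k r c.

Lemma dC_submod X k C : is_submod C -> is_submod (@dC X k C).
Proof.
move=> [H0 [H1 H2]]; split; first by move=> r; exists 0; rewrite d0.
split.
  move=> r a x y [c1 [C1 ->]] [c2 [C2 ->]]; exists (a *: c1 + c2); split; first exact: H1.
  by rewrite pc_d_lin.
move=> r s x h [c [Cc ->]]; exists (pm_map (pc_mod X k) r s c); split; first exact: H2.
by rewrite pc_d_nat.
Qed.

Lemma dC_fd X k C r : fd_subspace (C r) -> fd_subspace (@dC X k C r).
Proof.
move=> [vs [H1 H2]]; exists (map (pc_d X k r) vs); split.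
  move=> i; rewrite size_map => Hi; rewrite (nth_map 0) //.
  by exists (nth 0 vs i); split=>//; apply: H1.
move=> x [c [Cc ->]]; have [a ->] := H2 c Cc.
rewrite d_sum; move: (map _ _) (size_map (pc_d X k r) vs) (fun i => @nth_map _ 0 _ 0 (pc_d X k r) i vs).
move=> l El Hl; move: a Hl; rewrite -El => a Hl.
exists a; apply: eq_bigr => i _; rewrite Hl //.
Qed.

Lemma rnn_eq (b b' : Rnn) : proj1_sig b = proj1_sig b' -> b = b'.
Proof.
case: b b' => x Hx [y Hy] /= E; subst y; f_equal; apply: proof_irrelevance.
Qed.

Lemma dC_tame X k (C : forall r, pc_mod X k r -> Prop) TC :
  is_submod C -> tame_wrt TC C -> (forall r, fd_subspace (C r)) ->
  locally_compact_mod (pc_mod X k.+1) -> exists T, tame_wrt T (@dC X k C).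
Proof.
move=> Csub tC fdC lc.
have [C0 [Clin Cmap]] := Csub.
pose Pb (b : Rnn) (T : list R) := forall r s, rnn_le b r -> rnn_le r s -> noT T r s ->
  forall c0, C b c0 -> pm_map (pc_mod X k.+1) b s (pc_d X k b c0) = 0 ->
  pm_map (pc_mod X k.+1) b r (pc_d X k b c0) = 0.
have [TB HTB] : exists T, forall t, List.In t (R0 :: TC) ->
    forall b : Rnn, proj1_sig b = t -> Pb b T.
  apply: (combine (Q := fun t T => forall b : Rnn, proj1_sig b = t -> Pb b T)).
    move=> t T T' H inc b Hb r s h1 h2 hT; apply: (H b Hb r s h1 h2).
    exact: noT_mono inc hT.
  move=> t _; case: (Rle_dec R0 t) => Ht; last first.
    by exists nil => b Hb; exfalso; apply: Ht; rewrite -Hb; exact: (proj2_sig b).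
  pose b0 := mkRnn Ht.
  have [vs [_ Hvs]] := fdC b0.
  have [T HT] := KL lc (fun i : 'I_(size vs) => pc_d X k b0 (nth 0 vs i)).
  exists T => b Hb; have -> : b = b0 by apply: rnn_eq.
  move=> r s h1 h2 hT c0 Cc0; have [a ->] := Hvs c0 Cc0; rewrite d_sum.
  exact: HT.
exists (TC ++ TB) => r s hrs hT.
have hTC : noT TC r s by apply: noT_mono hT => x Hx; apply: List.in_or_app; left.
have hTB : noT TB r s by apply: noT_mono hT => x Hx; apply: List.in_or_app; right.
have [inj sur] := tC r s hrs hTC.
have rpos : Rle R0 (proj1_sig r) := proj2_sig r.
have [bR [HbR [Hb1 [Hb2 Hb3]]]] := list_max_base TC rpos.
pose b := mkRnn Hb1.
have hbr : rnn_le b r by [].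
have [_ surbr] := tC b r hbr Hb3.
split.
  move=> y1 y2 [c1 [C1 ->]] [c2 [C2 ->]] heq.
  pose c := (-1) *: c2 + c1.
  have Cc : C r c by apply: Clin.
  have dc : pc_d X k r c = - pc_d X k r c2 + pc_d X k r c1 by rewrite /c pc_d_lin scaleN1r.
  have pdc : pm_map (pc_mod X k.+1) r s (pc_d X k r c) = 0.
    by rewrite /c pc_d_lin pm_map_lin // heq scaleN1r addNr.
  have [c0 [Cc0 Hc0]] := surbr c Cc.
  have Hpb := HTB bR _ b erefl r s hbr hrs hTB c0 Cc0.
  have : pm_map (pc_mod X k.+1) b r (pc_d X k b c0) = 0.
    apply: Hpb; first by case: HbR => [->|H]; [left|right].
    by rewrite -(pm_map_comp hbr hrs) -pc_d_nat // Hc0.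
  rewrite -pc_d_nat // Hc0 dc => /eqP; rewrite addrC subr_eq0 => /eqP //.
move=> y [c [Cc ->]]; have [c' [Cc' Hc']] := sur c Cc.
exists (pc_d X k r c'); split; first by exists c'.
by rewrite -pc_d_nat // Hc'.
Qed.

Definition castm (X : pcomplex) j j' (e : j = j') r (y : pc_mod X j r) : pc_mod X j' r :=
  eq_rect j (fun j => pc_mod X j r) y j' e.

Definition Sdef (X : pcomplex) k (C : forall r, pc_mod X k r -> Prop) :
  forall j r, pc_mod X j r -> Prop :=
  fun j r y => (exists e : k = j, exists c, C r c /\ y = castm e c) \/
    (exists e : k.+1 = j, exists c, C r c /\ y = castm e (pc_d X k r c)) \/ y = 0.

Lemma SK X k C r y : C r 0 -> (@Sdef X k C k r y <-> C r y).
Proof.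
move=> C0; split.
  case=> [[e [c [Cc ->]]]|[[e _]|->]] //.
    by rewrite (eq_axiomK e).
  by exfalso; move: e; apply/eqP; rewrite eqn_leq ltnn.
by move=> Cy; left; exists erefl, y.
Qed.

Lemma SK1 X k C r y : C r 0 -> (@Sdef X k C k.+1 r y <-> @dC X k C r y).
Proof.
move=> C0; split.
  case=> [[e _]|[[e [c [Cc ->]]]|->]].
  - by exfalso; move: e; apply/eqP; rewrite eqn_leq ltnn andbF.
  - by rewrite (eq_axiomK e); exists c.
  - by exists 0; rewrite d0.
by move=> [c [Cc ->]]; right; left; exists erefl, c.
Qed.

Lemma SO X k C j r y : j <> k -> j <> k.+1 -> (@Sdef X k C j r y <-> y = 0).
Proof.
move=> h1 h2; split; last by move=> ->; right; right.
by case=> [[e _]|[[e _]|->]] //; exfalso; [apply: h1|apply: h2].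
Qed.

Theorem mainTheorem18 (X : pcomplex) :
  locally_compact_complex X <-> (forall k : nat, locally_compact_mod (pc_mod X k)).
Proof.
split.
  move=> lc k r x; have [S [[[Ssub _] [[T tS] [_ fdS]]] Sx]] := lc k r x.
  by exists (S k); split=>//; split=>//; split; [exists T|].
move=> lc k r x.
have [C [[Csub [[TC tC] fdC]] Cx]] := lc k r x.
have C0 : forall r, C r 0 by case: Csub.
have [TD tD] := dC_tame Csub tC fdC (lc k.+1).
exists (@Sdef X k C); split; last by apply/SK.
split.
  split.
    move=> j.
    case: (eqVneq j k) => [->|njk].
      by apply: (submod_ext (S := C)) => // r' y; rewrite SK.
    case: (eqVneq j k.+1) => [->|njk1].
      by apply: (submod_ext (S := @dC X k C)) => [r' y|]; [rewrite SK1|apply: dC_submod].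
    apply: (submod_ext (S := fun r (x : pc_mod X j r) => x = 0)); last exact: zero_submod.
    by move=> r' y; rewrite SO //; apply/eqP.
  move=> j r'.
  case: (eqVneq j k) => [->|njk].
    by move=> y; rewrite SK // SK1 // => Cy; exists y.
  case: (eqVneq j k.+1) => [->|njk1].
    by move=> y; rewrite SK1 //; move=> [c [Cc ->]]; rewrite pc_dd; right; right.
  have h1 : j <> k by apply/eqP.
  have h2 : j <> k.+1 by apply/eqP.
  by move=> y /(SO _ _ h1 h2) ->; rewrite d0; right; right.
split.
  exists (TC ++ TD) => j.
  case: (eqVneq j k) => [->|njk].
    apply: (tame_ext (S := C)) => [r' y|]; first by rewrite SK.
    by apply: tame_mono tC => t Ht; apply: List.in_or_app; left.
  case: (eqVneq j k.+1) => [->|njk1].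
    apply: (tame_ext (S := @dC X k C)) => [r' y|]; first by rewrite SK1.
    by apply: tame_mono tD => t Ht; apply: List.in_or_app; right.
  apply: (tame_ext (S := fun r (x : pc_mod X j r) => x = 0)); last exact: zero_tame.
  by move=> r' y; rewrite SO //; apply/eqP.
split.
  move=> r'; exists k.+1 => j Hj y.
  rewrite SO //; apply/eqP; [rewrite neq_ltn; apply/orP; right|rewrite neq_ltn; apply/orP; right] => //.
  exact: leq_trans (leqnSn _) Hj.
move=> j r'.
case: (eqVneq j k) => [->|njk].
  by apply: (fd_ext (P := C r')) => [y|//]; rewrite SK.
case: (eqVneq j k.+1) => [->|njk1].
  by apply: (fd_ext (P := @dC X k C r')) => [y|]; [rewrite SK1|apply: dC_fd].
apply: (fd_ext (P := fun x : pc_mod X j r' => x = 0)); last exact: zero_fd.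
by move=> y; rewrite SO //; apply/eqP.
Qed.
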